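(* Let $n\ge 1$, let $\preceq$ be an admissible order on $L([0,1])$, let $F\colon L([0,1])\times L([0,1])\to L([0,1])$ and $G\colon L([0,1])^n\to L([0,1])$ be functions and let $m\colon 2^N\to L([0,1])$ be an IV fuzzy measure with respect to $\preceq$. Then: (i) if $m$ is symmetric, the triplet $(m,F,G)$ satisfies Condition (WDS) (for arbitrary $F,G$); (ii) if $G=f\circ \mathrm{Proj}_1$ for some function $f\colon L([0,1])\to L([0,1])$, then $(m,F,G)$ satisfies Condition (WDS) for any $m$; (iii) if $F$ is non-decreasing in the second variable and $G=f\circ\vee$ for some function $f\colon L([0,1])\to L([0,1])$, then $(m,F,G)$ satisfies Condition (WDS) for any $m$.
   Context: $N=\{1,\dots,n\}$. $L([0,1])=\{[a,b]: 0\le a\le b\le 1\}$, $\mathbf 0=[0,0]$, $\mathbf 1=[1,1]$. $[a,b]\le_{spo}[c,d]$ iff $a\le c$ and $b\le d$. An admissible order $\preceq$ on $L([0,1])$ is a total order such that $X\le_{spo}Y$ implies $X\preceq Y$. $\vee$ and $\wedge$ denote maximum and minimum with respect to $\preceq$ (of two or of $n$ intervals). An IV fuzzy measure w.r.t. $\preceq$ is $m\colon 2^N\to L([0,1])$ with $m(\emptyset)=\mathbf 0$, $m(N)=\mathbf 1$, $m(A)\preceq m(B)$ for $A\subseteq B$; it is symmetric if $m(A)=m(B)$ whenever $|A|=|B|$. $\mathrm{Proj}_1(X_1,\dots,X_n)=X_1$. Monotonicity (non-decreasing) is with respect to $\preceq$. For a permutation $\sigma$ of $N$, $E_{\sigma(i)}=\{\sigma(i),\dots,\sigma(n)\}$.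 The triplet $(m,F,G)$ satisfies Condition (WDS) if for all $X_1,\dots,X_n\in L([0,1])$ and all permutations $\sigma_1,\sigma_2$ of $N$ with $X_{\sigma_j(1)}\preceq\dots\preceq X_{\sigma_j(n)}$ ($j=1,2$) one has $G\big(F(X_{\sigma_1(1)},m(E_{\sigma_1(1)})),\dots,F(X_{\sigma_1(n)},m(E_{\sigma_1(n)}))\big)=G\big(F(X_{\sigma_2(1)},m(E_{\sigma_2(1)})),\dots,F(X_{\sigma_2(n)},m(E_{\sigma_2(n)}))\big)$. *)

(* Defs.v *)
From HB Require Import structures.
From mathcomp Require Import all_boot all_order all_algebra all_fingroup.
From mathcomp Require Import reals.
Set Implicit Arguments. Unset Strict Implicit. Unset Printing Implicit Defensive.
Import Order.TTheory GRing.Theory Num.Theory.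
Local Open Scope ring_scope.

(* L([0,1]) : closed subintervals [a,b] of [0,1], encoded as the pair (a,b). *)
Definition IV (R : realType) :=
  {p : R * R | [&& 0 <= p.1, p.1 <= p.2 & p.2 <= 1]}.

Definition lb {R : realType} (X : IV R) : R := (proj1_sig X).1.
Definition ub {R : realType} (X : IV R) : R := (proj1_sig X).2.

Lemma IV0_proof (R : realType) : [&& (0:R) <= ((0:R),(0:R)).1, ((0:R),(0:R)).1 <= ((0:R),(0:R)).2 & ((0:R),(0:R)).2 <= 1].
Proof. by rewrite /= lexx ler01. Qed.
Lemma IV1_proof (R : realType) : [&& (0:R) <= ((1:R),(1:R)).1, ((1:R),(1:R)).1 <= ((1:R),(1:R)).2 & ((1:R),(1:R)).2 <= 1].
Proof. by rewrite /= lexx ler01. Qed.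

Definition IV0 (R : realType) : IV R := exist _ ((0:R), (0:R)) (IV0_proof R).
Definition IV1 (R : realType) : IV R := exist _ ((1:R), (1:R)) (IV1_proof R).

Definition le_spo {R : realType} (X Y : IV R) : Prop :=
  lb X <= lb Y /\ ub X <= ub Y.

Definition admissible {R : realType} (le : IV R -> IV R -> bool) : Prop :=
  [/\ (forall X, le X X),
      (forall X Y, le X Y -> le Y X -> X = Y),
      (forall X Y Z, le X Y -> le Y Z -> le X Z),
      (forall X Y, le X Y || le Y X) &
      (forall X Y, le_spo X Y -> le X Y)].

Definition ivmax {R : realType} (le : IV R -> IV R -> bool) (X Y : IV R) : IV R :=
  if le X Y then Y else X.

(* n-ary maximum w.r.t. le of (Y_1,...,Y_n), here n = k.+1 *)
Definition ivmaxn {R : realType} (le : IV R -> IV R -> bool) {k : nat}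
  (Y : 'I_k.+1 -> IV R) : IV R :=
  foldl (fun acc i => ivmax le acc (Y i)) (Y ord0) (enum 'I_k.+1).

Definition iv_fuzzy_measure {R : realType} (le : IV R -> IV R -> bool) {k : nat}
  (m : {set 'I_k.+1} -> IV R) : Prop :=
  [/\ m set0 = IV0 R, m setT = IV1 R &
      (forall A B : {set 'I_k.+1}, A \subset B -> le (m A) (m B))].

Definition iv_symmetric {R : realType} {k : nat} (m : {set 'I_k.+1} -> IV R) : Prop :=
  forall A B : {set 'I_k.+1}, #|A| = #|B| -> m A = m B.

Definition Eset {k : nat} (s : {perm 'I_k.+1}) (i : 'I_k.+1) : {set 'I_k.+1} :=
  [set s j | j in [pred j : 'I_k.+1 | (i <= j)%N]].

Definition sorts {R : realType} (le : IV R -> IV R -> bool) {k : nat}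
  (X : 'I_k.+1 -> IV R) (s : {perm 'I_k.+1}) : Prop :=
  forall i j : 'I_k.+1, (i <= j)%N -> le (X (s i)) (X (s j)).

Definition WDS {R : realType} (le : IV R -> IV R -> bool) {k : nat}
  (m : {set 'I_k.+1} -> IV R) (F : IV R -> IV R -> IV R)
  (G : ('I_k.+1 -> IV R) -> IV R) : Prop :=
  forall (X : 'I_k.+1 -> IV R) (s1 s2 : {perm 'I_k.+1}),
    sorts le X s1 -> sorts le X s2 ->
    G (fun i => F (X (s1 i)) (m (Eset s1 i))) =
    G (fun i => F (X (s2 i)) (m (Eset s2 i))).

Definition nondecr2 {R : realType} (le : IV R -> IV R -> bool)
  (F : IV R -> IV R -> IV R) : Prop :=
  forall X Y Z, le Y Z -> le (F X Y) (F X Z).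

(* Main.v *)
Require Import Defs.
From HB Require Import structures.
From mathcomp Require Import all_boot all_order all_algebra all_fingroup.
From mathcomp Require Import reals.
From Stdlib Require Import FunctionalExtensionality.
Set Implicit Arguments. Unset Strict Implicit. Unset Printing Implicit Defensive.

Lemma card_lt (n m : nat) : (m <= n)%N -> #|[set j : 'I_n | (j < m)%N]| = m.
Proof.
move=> le_mn.
have -> : [set j : 'I_n | (j < m)%N] = widen_ord le_mn @: [set: 'I_m].
  apply/setP=> j; rewrite inE; apply/idP/imsetP.
    by move=> jm; exists (Ordinal jm) => //; apply: val_inj.
  by case=> x _ ->; rewrite /= ltn_ord.
by rewrite card_imset ?cardsT ?card_ord //; by move=> a b /(congr1 val) /= h; apply: val_inj.
Qed.

Lemma pigeon (n : nat) (g : {perm 'I_n}) (i : 'I_n) :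
  exists j : 'I_n, (j <= i)%N /\ (i <= g j)%N.
Proof.
suff /existsP [j /andP [a b]] : [exists j : 'I_n, (j <= i)%N && (i <= g j)%N] by exists j.
apply/existsPn => H'.
have sub : g @: [set j : 'I_n | (j < i.+1)%N] \subset [set j : 'I_n | (j < i)%N].
  apply/subsetP=> x /imsetP [j]; rewrite !inE => ji ->.
  by move: (H' j); rewrite ltnS in ji; rewrite ji /= -ltnNge.
move: (subset_leq_card sub); rewrite card_imset; last exact: perm_inj.
by rewrite !card_lt ?ltnn // ltnW.
Qed.

Section S.
Variables (R : realType) (k : nat) (le : IV R -> IV R -> bool).
Hypothesis adm : admissible le.

Lemma sorts_eq (X : 'I_k.+1 -> IV R) s1 s2 :
  sorts le X s1 -> sorts le X s2 -> forall i, X (s1 i) = X (s2 i).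
Proof.
case: adm => _ anti trans _ _.
have half : forall s1 s2, sorts le X s1 -> sorts le X s2 -> forall i, le (X (s1 i)) (X (s2 i)).
  move=> t1 t2 h1 h2 i.
  have [j [ji ij]] := pigeon (t2 * t1^-1)%g i.
  move: ij; rewrite permM => ij.
  apply: trans (h1 _ _ ij) _; rewrite permKV; exact: h2.
by move=> h1 h2 i; apply: anti; apply: half.
Qed.

Lemma foldl_max (Y : 'I_k.+1 -> IV R) (s : seq 'I_k.+1) acc :
  let r := foldl (fun acc i => ivmax le acc (Y i)) acc s in
  [/\ le acc r, (forall x, x \in s -> le (Y x) r) & (r = acc \/ exists2 x, x \in s & r = Y x)].
Proof.
case: adm => refl anti trans tot _.
elim: s acc => [|a s IH] acc /=; first by split=> //; left.
have [h1 h2 h3] := IH (ivmax le acc (Y a)).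
have m1 : le acc (ivmax le acc (Y a)) by rewrite /ivmax; case: ifP.
have m2 : le (Y a) (ivmax le acc (Y a)).
  rewrite /ivmax; case: ifP => // /negbT H; by move: (tot acc (Y a)); rewrite (negbTE H).
split.
- exact: trans m1 h1.
- move=> x; rewrite inE => /orP [/eqP -> | xs]; [exact: trans m2 h1 | exact: h2].
- case: h3 => [-> | [x xs ->]]; last by right; exists x => //; rewrite inE xs orbT.
  rewrite /ivmax; case: ifP => _; [right; exists a => //; rewrite inE eqxx | by left]; done.
Qed.

Lemma ivmaxn_ge (Y : 'I_k.+1 -> IV R) i : le (Y i) (ivmaxn le Y).
Proof. by have [_ h _] := foldl_max Y (enum 'I_k.+1) (Y ord0); apply: h; rewrite mem_enum. Qed.

Lemma ivmaxn_in (Y : 'I_k.+1 -> IV R) : exists j, ivmaxn le Y = Y j.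
Proof.
have [_ _ [h|[x _ h]]] := foldl_max Y (enum 'I_k.+1) (Y ord0).
  by exists ord0. by exists x.
Qed.

Lemma ivmaxn_eq (A B : 'I_k.+1 -> IV R) :
  (forall i, exists j, le (A i) (B j)) -> (forall i, exists j, le (B i) (A j)) ->
  ivmaxn le A = ivmaxn le B.
Proof.
case: adm => _ anti trans _ _ hA hB.
have H : forall A B : 'I_k.+1 -> IV R, (forall i, exists j, le (A i) (B j)) ->
    le (ivmaxn le A) (ivmaxn le B).
  move=> A' B' h; have [a ->] := ivmaxn_in A'; have [j hj] := h a.
  exact: trans hj (ivmaxn_ge B' j).
by apply: anti; apply: H.
Qed.
End S.

Lemma card_Eset k (s1 s2 : {perm 'I_k.+1}) i : #|Eset s1 i| = #|Eset s2 i|.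
Proof. by rewrite /Eset !card_imset //; apply: perm_inj. Qed.

Lemma dom_terms (R : realType) (k : nat) (le : IV R -> IV R -> bool)
  (F : IV R -> IV R -> IV R) (m : {set 'I_k.+1} -> IV R) :
  admissible le -> iv_fuzzy_measure le m -> nondecr2 le F ->
  forall X s1 s2, sorts le X s1 -> sorts le X s2 ->
  forall i, exists j, le (F (X (s1 i)) (m (Eset s1 i))) (F (X (s2 j)) (m (Eset s2 j))).
Proof.
move=> adm [_ _ mono] ndF X s1 s2 h1 h2 i.
have E := sorts_eq adm h1 h2.
have adm' := adm; case: adm' => _ anti trans _ _.
have Pi : (fun j : 'I_k.+1 => X (s2 j) == X (s1 i)) i by rewrite /= E.
case: (@arg_minnP _ i (fun j : 'I_k.+1 => X (s2 j) == X (s1 i)) (fun j : 'I_k.+1 => nat_of_ord j) Pi) => i' /eqP Pi' mini.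
exists i'; rewrite Pi'; apply: ndF; apply: mono.
apply/subsetP=> x /imsetP [p]; rewrite inE /= => ip ->.
apply/imsetP; exists (s2^-1 (s1 p))%g; last by rewrite permKV.
rewrite inE /=; case: (leqP i' (s2^-1 (s1 p))%g) => // qi.
have hq : X (s2 (s2^-1 (s1 p))%g) = X (s1 i).
  apply: anti.
    by rewrite -Pi'; apply: h2; apply: ltnW.
  by rewrite permKV; apply: h1.
by move: (mini _ (introT eqP hq)); rewrite leqNgt qi.
Qed.

Theorem proposition1 (R : realType) (k : nat) (le : IV R -> IV R -> bool)
  (F : IV R -> IV R -> IV R) (G : ('I_k.+1 -> IV R) -> IV R)
  (m : {set 'I_k.+1} -> IV R) :
  admissible le -> iv_fuzzy_measure le m ->
  [/\ (iv_symmetric m -> WDS le m F G),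
      ((exists f : IV R -> IV R, G = (fun Y => f (Y ord0))) -> WDS le m F G) &
      (nondecr2 le F ->
       (exists f : IV R -> IV R, G = (fun Y => f (ivmaxn le Y))) -> WDS le m F G)].
Proof.
move=> adm hm; split.
- move=> sym X s1 s2 h1 h2; congr G; apply: functional_extensionality => i.
  by rewrite (sorts_eq adm h1 h2) (sym _ _ (card_Eset s1 s2 i)).
- move=> [f ->] X s1 s2 h1 h2 /=.
  rewrite (sorts_eq adm h1 h2); congr (f (F _ (m _))).
  by apply/setP=> x; rewrite /Eset; apply/imsetP/imsetP => -[j _ ->];
    [exists (s2^-1 (s1 j))%g; rewrite ?inE ?permKV | exists (s1^-1 (s2 j))%g; rewrite ?inE ?permKV].
- move=> ndF [f ->] X s1 s2 h1 h2 /=; congr f.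
  by apply: (ivmaxn_eq adm); move=> i; [apply: (dom_terms adm hm ndF h1 h2) | apply: (dom_terms adm hm ndF h2 h1)].
Qed.
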